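(* There exist an absolute constant $C>0$ and an integer $n_0$ such that for all $0<b<B\le1$ and every $n\ge n_0$ there is an instance $\langle A,f,c\rangle$ with $|A|=n$, $f$ subadditive, and $p(\{i\})\le b$ for all $i\in A$, such that $$\frac{\textsc{Max-Reward}(B)}{\textsc{Max-Reward}(b)}\ge C\sqrt n.$$
   Context: An instance $\langle A,f,c\rangle$ consists of a finite set $A$ of agents, a monotone nondecreasing $f:2^A\to[0,1]$, and costs $c_i\ge0$. For $S\subseteq A$, $i\in S$: $f_S(i)=f(S)-f(S\setminus\{i\})$; $p(S)=\sum_{i\in S}c_i/f_S(i)$ (conventions: $0$ if $c_i=0=f_S(i)$, $\infty$ if $c_i>0=f_S(i)$). $f$ is subadditive if $f(S\cup S')\le f(S)+f(S')$ for all $S,S'\subseteq A$. $\textsc{Max-Reward}(B)=\max\{f(S):S\subseteq A,\ p(S)\le B\}$. *)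

(* Defs.v *)
From Stdlib Require Import Reals.
From mathcomp Require Import all_boot all_order all_algebra.
From mathcomp Require Import reals ereal Rstruct.
Set Implicit Arguments. Unset Strict Implicit. Unset Printing Implicit Defensive.
Import Order.TTheory GRing.Theory Num.Theory.
Local Open Scope ring_scope.

Section Contracts.
Variable A : finType.

Definition valued01 (f : {set A} -> R) : Prop := forall S, 0 <= f S <= 1.
Definition monotone_set (f : {set A} -> R) : Prop :=
  forall S T : {set A}, S \subset T -> f S <= f T.
Definition subadditive (f : {set A} -> R) : Prop :=
  forall S T : {set A}, f (S :|: T) <= f S + f T.
Definition nonneg_costs (c : A -> R) : Prop := forall i, 0 <= c i.

Definition marginal (f : {set A} -> R) (S : {set A}) (i : A) : R :=
  f S - f (S :\ i).

Definition pay_term (f : {set A} -> R) (c : A -> R) (S : {set A}) (i : A)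
  : \bar R :=
  if marginal f S i == 0 then (if c i == 0 then 0%E else +oo%E)
  else (c i / marginal f S i)%:E.

Definition payment (f : {set A} -> R) (c : A -> R) (S : {set A}) : \bar R :=
  (\sum_(i in S) pay_term f c S i)%E.

(* Max-Reward(B) = max { f(S) : p(S) <= B }; f >= 0 and the empty set is
   feasible (for B >= 0), so 0 is a harmless neutral element. *)
Definition max_reward (f : {set A} -> R) (c : A -> R) (B : R) : R :=
  \big[Num.max/0]_(S : {set A} | (payment f c S <= B%:E)%E) f S.
End Contracts.

(* Main.v *)
Require Import Defs.
From Stdlib Require Import Reals.
From mathcomp Require Import all_boot all_order all_algebra.
From mathcomp Require Import reals ereal Rstruct lra ring zify.
Import Order.TTheory GRing.Theory Num.Theory.
Local Open Scope ring_scope.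

Definition clamp (c d x : R) : R := if x <= d then d else if c <= x then c else x.
Arguments clamp (c d x)%_ring_scope.

Ltac dest := match goal with |- context[if ?b then _ else _] =>
  lazymatch b with context[if _ then _ else _] => fail | _ => case: (boolP b) => ? end end.
Ltac clamp_tac := rewrite /clamp; repeat dest; lra.

Lemma clamp_bnd c d x : d <= c -> d <= clamp c d x <= c.
Proof. move=> h; apply/andP; split; clamp_tac. Qed.
Lemma clamp_lip c d x y : d <= c -> y <= x ->
  0 <= clamp c d x - clamp c d y <= x - y.
Proof. move=> h h2; apply/andP; split; clamp_tac. Qed.
Lemma clamp_sub c d x y z : 0 <= d -> d <= c -> 0 <= y -> 0 <= z -> x <= y + z ->
  clamp c d x <= clamp c d y + clamp c d z.
Proof. move=> *; clamp_tac. Qed.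
Lemma clamp_low c d x : d <= c -> x <= d -> clamp c d x = d.
Proof. move=> *; clamp_tac. Qed.
Lemma clamp_high c d x : d <= c -> c <= x -> clamp c d x = c.
Proof. move=> *; clamp_tac. Qed.
Lemma clamp_top c d y z : d <= c -> 1 <= c + d -> 1 <= y + z ->
  1 <= clamp c d y + clamp c d z.
Proof. move=> *; clamp_tac. Qed.
Arguments clamp_lip (c d x y)%_ring_scope.
Arguments clamp_bnd (c d x)%_ring_scope.

Section Constr.
Variables (n k : nat) (b B : R).
Definition dd : R := (k%:R)^-1.
Definition phi (s : nat) : R :=
  if s == 0%N then 0 else if s == n then 1 else clamp (1 - dd) dd (s%:R / n%:R).
Definition ff (S : {set 'I_n}) : R := phi #|S|.
Definition mm : R := Num.min b (B / n%:R).
Definition cc (i : 'I_n) := mm * dd.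

Hypotheses (k2 : (2 <= k)%N) (kn : (k * k <= n)%N) (b0 : 0 < b) (bB : b < B).

Lemma n4 : (4 <= n)%N.
Proof. apply: leq_trans kn; by apply: (leq_mul k2 k2). Qed.
Lemma nR0 : 0 < n%:R :> R.
Proof. rewrite ltr0n; by apply: leq_trans n4. Qed.
Lemma kR2 : 2 <= k%:R :> R.
Proof. by rewrite (ler_nat R 2 k). Qed.
Lemma dd0 : 0 < dd.
Proof. rewrite /dd invr_gt0; have := kR2; lra. Qed.
Lemma ddk : dd * k%:R = 1.
Proof. rewrite /dd mulVf //; have := kR2; lra. Qed.
Lemma ddhalf : dd <= 1 - dd.
Proof. have := ddk; have := kR2; have := dd0; nra. Qed.
Lemma ndd : 1 <= n%:R * (dd * dd).
Proof.
have hk : (k%:R * k%:R) <= n%:R :> R by rewrite -natrM ler_nat.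
have h := ddk; have := dd0 => h0.
have : k%:R * k%:R * (dd * dd) <= n%:R * (dd * dd) by apply: ler_wpM2r => //; nra.
have -> : k%:R * k%:R * (dd * dd) = (dd * k%:R) * (dd * k%:R) by ring.
by rewrite h mulr1.
Qed.
Lemma invn_dd : n%:R^-1 <= dd.
Proof.
have := ndd; have := nR0; have := dd0 => h0 hn h.
have hdd : dd <= 1 by have := ddhalf; lra.
have hi : 0 <= n%:R^-1 :> R by rewrite invr_ge0; lra.
have := ler_wpM2l hi h.
have -> : n%:R^-1 * (n%:R * (dd * dd)) = dd * dd by field; lra.
rewrite mulr1; nra.
Qed.

Lemma phi_01 s : 0 <= phi s <= 1.
Proof.
rewrite /phi; case: eqP => _; first by rewrite lexx ler01.
case: eqP => _; first by rewrite ler01 lexx.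
have := @clamp_bnd (1 - dd) dd (s%:R / n%:R) ddhalf; have := dd0.
move=> h /andP[h1 h2]; apply/andP; split; lra.
Qed.

Lemma natdiv_le s t : (s <= t)%N -> s%:R / n%:R <= t%:R / n%:R :> R.
Proof.
move=> h; apply: ler_wpM2r; first by rewrite invr_ge0; have := nR0; lra.
by rewrite ler_nat.
Qed.

Lemma phi_mono s t : (s <= t)%N -> (t <= n)%N -> phi s <= phi t.
Proof.
move=> st tn.
have [->|s0] := eqVneq s 0%N; first by rewrite [phi 0]/phi /=; case/andP: (phi_01 t).
have n0 : (n == 0%N) = false by have := n4; lia.
have phin : phi n = 1 by rewrite /phi n0; case: eqP.
have [->|tn'] := eqVneq t n; first by rewrite phin; case/andP: (phi_01 s).
have sn : s != n by move: tn' st tn; lia.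
have t0 : t != 0%N by move: st s0; lia.
rewrite /phi (negbTE s0) (negbTE sn) (negbTE t0) (negbTE tn').
by case/andP: (@clamp_lip (1 - dd) dd _ _ ddhalf (natdiv_le _ _ st)); lra.
Qed.

Lemma n_ne0 : (n == 0%N) = false. Proof. by have := n4; lia. Qed.
Lemma phi_n : phi n = 1. Proof. by rewrite /phi n_ne0; case: eqP. Qed.
Lemma phi_0 : phi 0 = 0. Proof. by []. Qed.
Lemma phi_mid_eq s : s != 0%N -> s != n -> phi s = clamp (1 - dd) dd (s%:R / n%:R).
Proof. by move=> h1 h2; rewrite /phi (negbTE h1) (negbTE h2). Qed.
Arguments phi_mid_eq {s}.

Lemma phi_sub s t u : (u <= s + t)%N -> (s <= u)%N -> (t <= u)%N -> (u <= n)%N ->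
  phi u <= phi s + phi t.
Proof.
move=> hu su tu un.
case/andP: (phi_01 s) => s0' s1'; case/andP: (phi_01 t) => t0' t1'.
have [->|u0] := eqVneq u 0%N; first by rewrite phi_0; lra.
have [e|s0] := eqVneq s 0%N.
  have -> : t = u by move: e hu tu; lia.
  by rewrite e phi_0; lra.
have [e|t0] := eqVneq t 0%N.
  have -> : s = u by move: e hu su; lia.
  by rewrite e phi_0; lra.
have [e|sn] := eqVneq s n; first by rewrite e phi_n; move: (phi_01 u) => /andP[? ?]; lra.
have [e|tn] := eqVneq t n; first by rewrite e phi_n; move: (phi_01 u) => /andP[? ?]; lra.
rewrite (phi_mid_eq s0 sn) (phi_mid_eq t0 tn).
have nn : 0 <= n%:R^-1 :> R by rewrite invr_ge0; have := nR0; lra.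
have sp : 0 <= s%:R / n%:R :> R by apply: mulr_ge0.
have tp : 0 <= t%:R / n%:R :> R by apply: mulr_ge0.
have [e|un'] := eqVneq u n.
  rewrite e phi_n; apply: clamp_top; [exact: ddhalf|by rewrite subrK|].
  rewrite -mulrDl -natrD.
  have h : (n <= s + t)%N by rewrite -e.
  have := natdiv_le _ _ h; rewrite mulfV //; have := nR0; rewrite lt0r => /andP[]//.
rewrite (phi_mid_eq u0 un'); apply: clamp_sub => //; [exact: (ltW dd0)|exact: ddhalf|].
by rewrite -mulrDl -natrD; apply: natdiv_le.
Qed.

Lemma nR_ne0 : n%:R != 0 :> R.
Proof. by have := nR0; rewrite lt0r => /andP[]. Qed.

Lemma phi_1 : phi 1 = dd.
Proof.
rewrite phi_mid_eq //; last by have := n4; lia.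
apply: clamp_low; first exact: ddhalf.
rewrite mulr1n div1r; exact: invn_dd.
Qed.

Lemma phi_nm1 : phi n.-1 = 1 - dd.
Proof.
rewrite phi_mid_eq; [|by have := n4; lia|by have := n4; lia].
apply: clamp_high; first exact: ddhalf.
have -> : (n.-1)%:R / n%:R = 1 - n%:R^-1 :> R.
  rewrite -subn1 natrB; last by have := n4; lia.
  by field; exact: nR_ne0.
have := invn_dd; lra.
Qed.

Lemma phi_incr s : (2 <= s)%N -> (s < n)%N ->
  0 <= phi s - phi s.-1 <= n%:R^-1 /\ (0 < phi s - phi s.-1 -> dd < s%:R / n%:R).
Proof.
move=> s2 sn.
rewrite (phi_mid_eq (s:=s)); [|lia|lia].
rewrite (phi_mid_eq (s:=s.-1)); [|lia|lia].
have es : (s.-1)%:R = s%:R - 1 :> R.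
  by rewrite -subn1 natrB //; lia.
have ed : s%:R / n%:R - (s.-1)%:R / n%:R = n%:R^-1 :> R.
  by rewrite es; field; exact: nR_ne0.
have hy : (s.-1)%:R / n%:R <= s%:R / n%:R :> R by apply: natdiv_le; lia.
split.
  by have := @clamp_lip (1 - dd) dd _ _ ddhalf hy; rewrite ed.
move=> hpos; case: (lerP (s%:R / n%:R) dd) => // hle.
have hle' := le_trans hy hle.
move: hpos; rewrite (clamp_low _ _ _ ddhalf hle) (clamp_low _ _ _ ddhalf hle'); lra.
Qed.

Lemma mm0 : 0 < mm.
Proof.
rewrite /mm lt_min b0 /=; apply: divr_gt0; [exact: lt_trans b0 bB|exact: nR0].
Qed.

Lemma ccdd0 : mm * dd != 0.
Proof. by rewrite mulf_neq0 // gt_eqF // ?mm0 ?dd0. Qed.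

Definition Dinc (s : nat) := phi s - phi s.-1.

Lemma pay_eq (S : {set 'I_n}) : (0 < #|S|)%N ->
  payment ff cc S =
  (if Dinc #|S| == 0%R then +oo
   else (#|S|%:R * (mm * dd / Dinc #|S|))%:E)%E.
Proof.
move=> hS.
set D := Dinc #|S|.
have ht : forall i, i \in S -> pay_term ff cc S i =
    (if D == 0%R then +oo else (mm * dd / D)%:E)%E.
  move=> i iS; rewrite /pay_term /marginal /ff.
  have -> : #|S :\ i| = #|S|.-1 by rewrite (cardsD1 i S) iS.
  rewrite /D /Dinc /cc; case: ifP => // _.
  by rewrite (negbTE ccdd0).
rewrite /payment (eq_bigr _ ht).
case: ifP => _.
  case/card_gt0P: hS => i iS.
  rewrite (bigD1 i iS) /= addye //.
  have : (0 <= \sum_(j in S | j != i) (+oo : \bar R))%E.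
    by apply: sume_ge0 => t _; exact: leey.
  by case: (\sum_(j in S | j != i) _)%E.
by rewrite sumEFin sumr_const mulr_natl.
Qed.

Lemma dd_ne0 : dd != 0.
Proof. by rewrite gt_eqF // dd0. Qed.

Lemma Dinc1 : Dinc 1 = dd.
Proof. rewrite /Dinc phi_1 [phi _]phi_0; lra. Qed.

Lemma Dincn : Dinc n = dd.
Proof. rewrite /Dinc phi_n phi_nm1; lra. Qed.

Lemma pay_single (S : {set 'I_n}) : #|S| = 1%N -> payment ff cc S = mm%:E.
Proof.
move=> h; rewrite pay_eq h // Dinc1 (negbTE dd_ne0).
by congr (_%:E); rewrite mulr1n mul1r mulfK // dd_ne0.
Qed.

Lemma pay_top (S : {set 'I_n}) : #|S| = n -> payment ff cc S = (n%:R * mm)%:E.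
Proof.
move=> h; rewrite pay_eq h; last by have := n4; lia.
by rewrite Dincn (negbTE dd_ne0) mulfK // dd_ne0.
Qed.

Lemma nmm : b < n%:R * mm.
Proof.
rewrite /mm minElt; case: ifPn => _.
  have : 2 <= n%:R :> R by rewrite (ler_nat R 2 n); have := n4; lia.
  move=> h2; have := ler_wpM2r (ltW b0) h2; have := b0; lra.
rewrite mulrC mulfVK; [exact: bB|exact: nR_ne0].
Qed.

Lemma nmmB : n%:R * mm <= B.
Proof.
rewrite /mm minElt; case: ifPn => h.
  rewrite -(mulfVK nR_ne0 B) (mulrC n%:R) ler_pM2r; [exact: ltW|exact: nR0].
by rewrite mulrC mulfVK; [exact: lexx|exact: nR_ne0].
Qed.

Lemma mm_b : mm <= b.
Proof. by rewrite /mm ge_min lexx. Qed.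

Lemma pay_mid (S : {set 'I_n}) : (2 <= #|S|)%N -> (#|S| < n)%N ->
  (b%:E < payment ff cc S)%E.
Proof.
move=> h2 hn; rewrite pay_eq; last by lia.
have [/andP[D0 D1] Dp] := phi_incr _ h2 hn.
rewrite -/(Dinc #|S|) in D0 D1 Dp.
case: ifPn => hD; first exact: ltey.
rewrite lte_fin.
set D := Dinc #|S| in D0 D1 Dp hD.
set s := #|S|%:R : R.
have Dpos : 0 < D by rewrite lt0r hD.
have hs : dd < s / n%:R := Dp Dpos.
have nR := nR0.
have hs' : n%:R * dd < s.
  move: hs; rewrite -(ltr_pM2l nR) (mulrC s) mulrA mulfV ?mul1r //; exact: nR_ne0.
have hDi : D * D^-1 = 1 by rewrite mulfV.
have hnD : n%:R * D <= 1.
  have := ler_wpM2l (ltW nR) D1; rewrite mulfV //; exact: nR_ne0.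
have Di0 : 0 < D^-1 by rewrite invr_gt0.
have hnDi : n%:R <= D^-1 by nra.
have m0 := mm0; have d0 := dd0; have ndd' := ndd; have nm := nmm.
have e1 : mm * dd * n%:R <= mm * dd / D.
  apply: ler_wpM2l => //; apply: mulr_ge0; exact: ltW.
have e2 : s * (mm * dd * n%:R) <= s * (mm * dd / D).
  apply: ler_wpM2l => //; rewrite /s; exact: ler0n.
have e3 : n%:R * dd * (mm * dd * n%:R) < s * (mm * dd * n%:R).
  rewrite ltr_pM2r //; apply: mulr_gt0 => //; exact: mulr_gt0.
have e4 : n%:R * dd * (mm * dd * n%:R) = (n%:R * (dd * dd)) * (n%:R * mm) by ring.
have e5 : n%:R * mm <= (n%:R * (dd * dd)) * (n%:R * mm).
  rewrite -{1}(mul1r (n%:R * mm)); apply: ler_wpM2r => //.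
  apply: mulr_ge0; exact: ltW.
lra.
Qed.

Lemma cardn (S : {set 'I_n}) : (#|S| <= n)%N.
Proof. by rewrite -[X in (_ <= X)%N]card_ord max_card. Qed.

Lemma mr_b_le : max_reward ff cc b <= dd.
Proof.
rewrite /max_reward; apply: bigmax_le; first exact: ltW dd0.
move=> S hS; rewrite /ff.
have hSn := cardn S.
have [->|h0] := eqVneq #|S| 0%N; first by rewrite phi_0; exact: ltW dd0.
have [->|h1] := eqVneq #|S| 1%N; first by rewrite phi_1.
have [hn|hn] := eqVneq #|S| n.
  move: hS; rewrite (pay_top S hn) lee_fin => h; have := nmm; lra.
have h2 : (2 <= #|S|)%N by lia.
have h3 : (#|S| < n)%N by lia.
have := pay_mid S h2 h3; rewrite ltNge hS //.
Qed.

Lemma i0 : 'I_n.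
Proof. by apply: (@Ordinal n 0); have := n4; lia. Qed.

Lemma mr_b_ge : dd <= max_reward ff cc b.
Proof.
have hP : (payment ff cc [set i0] <= b%:E)%E by rewrite (pay_single _ (cards1 _)) // lee_fin mm_b.
rewrite /max_reward (bigD1 [set i0]) //= le_max; apply/orP; left.
by rewrite /ff cards1 phi_1.
Qed.

Lemma mr_B_ge : 1 <= max_reward ff cc B.
Proof.
have hc : #|[set: 'I_n]| = n by rewrite cardsT card_ord.
have hP : (payment ff cc [set: 'I_n] <= B%:E)%E by rewrite (pay_top _ hc) lee_fin nmmB.
rewrite /max_reward (bigD1 [set: 'I_n]) //= le_max; apply/orP; left.
by rewrite /ff hc phi_n.
Qed.

Lemma inst :
  valued01 ff /\ monotone_set ff /\ nonneg_costs cc /\ subadditive ff /\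
  (forall i : 'I_n, (payment ff cc [set i] <= b%:E)%E) /\
  0 < max_reward ff cc b /\
  k%:R <= max_reward ff cc B / max_reward ff cc b.
Proof.
split; first by move=> S; exact: phi_01.
split; first by move=> S T hST; apply: phi_mono; [exact: subset_leq_card|exact: cardn].
split; first by move=> i; apply: mulr_ge0; [exact: ltW mm0|exact: ltW dd0].
split.
  move=> S T; rewrite /ff; apply: phi_sub; last exact: cardn.
  - by have := cardsUI S T; lia.
  - by apply: subset_leq_card; exact: subsetUl.
  - by apply: subset_leq_card; exact: subsetUr.
split; first by move=> i; rewrite (pay_single _ (cards1 _)) // lee_fin mm_b.
have h1 := mr_b_le; have h2 := mr_b_ge; have h3 := mr_B_ge; have d0 := dd0.
have hk := ddk.
split; first lra.
rewrite ler_pdivlMr; last lra.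
have k0 : 0 <= k%:R :> R by exact: ler0n.
nra.
Qed.
End Constr.

Theorem mainTheorem15 :
  exists (C : R) (n0 : nat), 0 < C /\
    forall (b B : R) (n : nat), 0 < b -> b < B -> B <= 1 -> (n0 <= n)%N ->
      exists (f : {set 'I_n} -> R) (c : 'I_n -> R),
        valued01 f /\ monotone_set f /\ nonneg_costs c /\ subadditive f /\
        (forall i : 'I_n, (payment f c [set i] <= b%:E)%E) /\
        0 < max_reward f c b /\
        C * Num.sqrt (n%:R) <= max_reward f c B / max_reward f c b.
Proof.
exists (1 / 2), 4%N; split; first lra.
move=> b B n b0 bB B1 n4.
have [hk1 hk2] := Nat.sqrt_specif n.
set k := Nat.sqrt n in hk1 hk2.
have k2 : (2 <= k)%N by nia.
have kn : (k * k <= n)%N by lia.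
exists (ff n k), (cc n k b B).
have [h1 [h2 [h3 [h4 [h5 [h6 h7]]]]]] := inst _ _ _ _ k2 kn b0 bB.
do 6 (split; first by []).
apply: le_trans h7.
have hn : (n%:R : R) <= (2 * (k%:R : R)) ^+ 2.
  rewrite -natrM -natrX ler_nat; nia.
have hs : Num.sqrt (n%:R : R) <= 2 * (k%:R : R).
  have h2k : 0 <= 2 * (k%:R : R) by apply: mulr_ge0 => //; exact: ler0n.
  have e : Num.sqrt ((2 * (k%:R : R)) ^+ 2) = 2 * (k%:R : R) by rewrite sqrtr_sqr ger0_norm.
  rewrite -e ler_sqrt //; exact: sqr_ge0.
lra.
Qed.
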